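(* Let $\gamma_*>0$ and let $\Phi$ denote the standard normal CDF. Define \[ t_+=\tfrac32\gamma_*+\tfrac{1}{\gamma_*}\log\left(1-\sqrt{1-e^{-\gamma_*}}\right),\qquad t_-=\tfrac32\gamma_*+\tfrac{1}{\gamma_*}\log\left(1+\sqrt{1-e^{-\gamma_*}}\right), \] and for $x\ne2\gamma_*$ \[ h(x)=\frac{\Phi(t_--x)-\Phi(t_--2\gamma_* )}{\Phi(t_+-x)-\Phi(t_+-2\gamma_* )}. \] Let $k=e^{-\frac12(t_--2\gamma_* )^2+\frac12(t_+-2\gamma_* )^2}$ and $c=\frac{k}{1+k}$. Then $\lim_{x\to2\gamma_*}h(x)=k$, $c\in(0,1)$, and \[ h(x)\le\frac{c}{1-c}\ \text{ if } x<2\gamma_*,\qquad h(x)\ge\frac{c}{1-c}\ \text{ if } x>2\gamma_*. \] *)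

(* Defs.v *)
From Stdlib Require Import Reals.
From Coquelicot Require Import Coquelicot.
Open Scope R_scope.

Definition std_normal_pdf (t : R) : R := exp (- t ^ 2 / 2) / sqrt (2 * PI).
Definition Phi (x : R) : R :=
  RInt_gen std_normal_pdf (Rbar_locally m_infty) (at_point x).

Definition t_plus (g : R) : R := 3 / 2 * g + / g * ln (1 - sqrt (1 - exp (- g))).
Definition t_minus (g : R) : R := 3 / 2 * g + / g * ln (1 + sqrt (1 - exp (- g))).

Definition h_fun (g x : R) : R :=
  (Phi (t_minus g - x) - Phi (t_minus g - 2 * g)) /
  (Phi (t_plus g - x) - Phi (t_plus g - 2 * g)).

Definition k_const (g : R) : R :=
  exp (- / 2 * (t_minus g - 2 * g) ^ 2 + / 2 * (t_plus g - 2 * g) ^ 2).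

Definition c_const (g : R) : R := k_const g / (1 + k_const g).

(* Main.v *)
Require Import Defs.
From Stdlib Require Import Reals Lra.
From Coquelicot Require Import Coquelicot.
Open Scope R_scope.

Lemma exp_mono x y : x <= y -> exp x <= exp y.
Proof. intros [H|H]. left; now apply exp_increasing. subst; lra. Qed.

Lemma sq_pos : 0 < sqrt (2 * PI).
Proof. apply sqrt_lt_R0. pose proof PI_RGT_0. lra. Qed.

Lemma sq_ge1 : 1 <= sqrt (2 * PI).
Proof. rewrite <- sqrt_1. apply sqrt_le_1_alt. pose proof PI_RGT_0. pose proof PI2_3_2. lra. Qed.

Lemma phi_cont t : continuous std_normal_pdf t.
Proof. apply (@ex_derive_continuous R_AbsRing R_NormedModule). unfold std_normal_pdf. auto_derive. auto. Qed.

Lemma phi_pos t : 0 < std_normal_pdf t.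
Proof. unfold std_normal_pdf. apply Rdiv_lt_0_compat. apply exp_pos. apply sq_pos. Qed.

Lemma phi_ex a b : ex_RInt std_normal_pdf a b.
Proof. apply (@ex_RInt_continuous R_CompleteNormedModule). intros; apply phi_cont. Qed.

Lemma phi_le t : std_normal_pdf t <= exp (t + 1).
Proof.
  unfold std_normal_pdf.
  apply Rle_trans with (exp (- t ^ 2 / 2)).
  - apply Rle_div_l. apply sq_pos. pose proof (exp_pos (- t ^ 2 / 2)). pose proof sq_ge1. nra.
  - apply exp_mono. nra.
Qed.

Lemma int_exp p q : RInt (fun t => exp (t + 1)) p q = exp (q + 1) - exp (p + 1).
Proof.
  apply is_RInt_unique.
  apply (is_RInt_derive (fun t => exp (t + 1))).
  - intros x _. auto_derive; auto. ring.
  - intros x _. apply (@ex_derive_continuous R_AbsRing R_NormedModule). auto_derive. auto.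
Qed.

Lemma int_bound p q : p <= q -> 0 <= RInt std_normal_pdf p q <= exp (q + 1).
Proof.
  intros Hpq. split.
  - apply Rle_trans with (RInt (fun _ => 0) p q).
    + rewrite RInt_const. simpl. unfold scal; simpl. unfold mult; simpl. lra.
    + apply RInt_le; auto. apply ex_RInt_const. apply phi_ex. intros; left; apply phi_pos.
  - apply Rle_trans with (RInt (fun t => exp (t + 1)) p q).
    + apply RInt_le; auto. apply phi_ex. apply (@ex_RInt_continuous R_CompleteNormedModule). intros; apply (@ex_derive_continuous R_AbsRing R_NormedModule); auto_derive; auto.
      intros; apply phi_le.
    + rewrite int_exp. pose proof (exp_pos (p+1)). lra.
Qed.

Lemma small_int a1 a2 M : a1 < M -> a2 < M -> Rabs (RInt std_normal_pdf a2 a1) < exp (M + 1).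
Proof.
  intros H1 H2.
  assert (E1 : exp (a1 + 1) < exp (M + 1)) by (apply exp_increasing; lra).
  assert (E2 : exp (a2 + 1) < exp (M + 1)) by (apply exp_increasing; lra).
  destruct (Rle_lt_dec a2 a1) as [H|H].
  - destruct (int_bound a2 a1 H). rewrite Rabs_pos_eq; lra.
  - rewrite <- opp_RInt_swap by apply phi_ex.
    destruct (int_bound a1 a2 (Rlt_le _ _ H)).
    change (Rabs (- RInt std_normal_pdf a1 a2) < exp (M + 1)).
    rewrite Rabs_Ropp, Rabs_pos_eq; lra.
Qed.

Lemma phi_gen x : ex_RInt_gen std_normal_pdf (Rbar_locally m_infty) (at_point x).
Proof.
  assert (H1 : filter_prod (Rbar_locally m_infty) (at_point x)
    (fun ab : R * R => (exists y : R_CompleteSpace, is_RInt std_normal_pdf (fst ab) (snd ab) y) /\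
     (forall y1 y2 : R_CompleteSpace,
      is_RInt std_normal_pdf (fst ab) (snd ab) y1 ->
      is_RInt std_normal_pdf (fst ab) (snd ab) y2 -> y1 = y2))).
  { apply filter_forall. intros [p q]; simpl. split.
    + exists (RInt std_normal_pdf p q). apply (RInt_correct (V:=R_CompleteNormedModule)). apply phi_ex.
    + intros y1 y2 H1 H2. apply (is_RInt_unique (V:=R_CompleteNormedModule)) in H1. apply (is_RInt_unique (V:=R_CompleteNormedModule)) in H2. congruence. }
  destruct (proj1 (@filterlimi_locally_cauchy _ R_CompleteSpace
    (filter_prod (Rbar_locally m_infty) (at_point x)) _
    (fun ab => is_RInt std_normal_pdf (fst ab) (snd ab)) H1)) as [y Hy].
  - intros eps.
    exists (fun ab => fst ab < ln eps - 1 /\ snd ab = x). split.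
    + apply (Filter_prod _ _ _ (fun a => a < ln eps - 1) (fun b => b = x)).
      * exists (ln eps - 1). auto.
      * reflexivity.
      * simpl. auto.
    + intros [a1 b1] [a2 b2] [Ha1 Hb1] [Ha2 Hb2] u' v' Hu Hv. simpl in *. subst.
      apply (is_RInt_unique (V:=R_CompleteNormedModule)) in Hu. apply (is_RInt_unique (V:=R_CompleteNormedModule)) in Hv. subst.
      change (Rabs (RInt std_normal_pdf a2 x - RInt std_normal_pdf a1 x) < eps).
      rewrite <- (RInt_Chasles std_normal_pdf a2 a1 x) by apply phi_ex.
      change (Rabs (RInt std_normal_pdf a2 a1 + RInt std_normal_pdf a1 x - RInt std_normal_pdf a1 x) < eps).
      assert (E : forall A B : R, A + B - B = A) by (intros; ring). rewrite E.
      replace (pos eps) with (exp (ln eps - 1 + 1)).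
      apply small_int; auto.
      replace (ln eps - 1 + 1) with (ln eps) by ring. apply exp_ln. apply cond_pos.
  - exists y. exact Hy.
Qed.

Lemma Phi_diff y z : Phi y - Phi z = RInt std_normal_pdf z y.
Proof.
  unfold Phi.
  rewrite <- (RInt_gen_Chasles std_normal_pdf z (phi_gen z)).
  - rewrite RInt_gen_at_point by apply phi_ex. change (Phi z + RInt std_normal_pdf z y - Phi z = RInt std_normal_pdf z y). ring.
  - apply ex_RInt_gen_at_point. apply phi_ex.
Qed.

Lemma tpm g : 0 < g -> t_plus g <= t_minus g.
Proof.
  intros hg. unfold t_plus, t_minus.
  set (s := sqrt (1 - exp (- g))).
  assert (Hs : 0 <= s) by apply sqrt_pos.
  assert (L1 : 0 <= ln (1 + s)) by (rewrite <- ln_1; apply ln_le; lra).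
  assert (L2 : ln (1 - s) <= 0).
  { destruct (Rlt_dec 0 (1 - s)).
    - rewrite <- ln_1; apply ln_le; lra.
    - unfold ln. destruct (Rlt_dec 0 (1 - s)); [contradiction | lra]. }
  assert (0 < / g) by (apply Rinv_0_lt_compat; lra).
  nra.
Qed.

Section Main.
Variables a b : R.
Hypothesis hab : b <= a.
Let k := exp (- / 2 * a ^ 2 + / 2 * b ^ 2).

Lemma kphi s : k * std_normal_pdf (b + s) = exp (- (a + s) ^ 2 / 2 + (a - b) * s) / sqrt (2 * PI).
Proof.
  unfold k, std_normal_pdf. rewrite Rmult_div_assoc, <- exp_plus. apply (f_equal (fun t => exp t / sqrt (2 * PI))). field.
Qed.

Lemma cmp_pos s : 0 <= s -> std_normal_pdf (a + s) <= k * std_normal_pdf (b + s).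
Proof.
  intros Hs. rewrite kphi. unfold std_normal_pdf.
  apply Rmult_le_compat_r. left; apply Rinv_0_lt_compat, sq_pos.
  apply exp_mono. assert (0 <= (a - b) * s) by (apply Rmult_le_pos; lra). lra.
Qed.

Lemma cmp_neg s : s <= 0 -> k * std_normal_pdf (b + s) <= std_normal_pdf (a + s).
Proof.
  intros Hs. rewrite kphi. unfold std_normal_pdf.
  apply Rmult_le_compat_r. left; apply Rinv_0_lt_compat, sq_pos.
  apply exp_mono. assert (0 <= (a - b) * (- s)) by (apply Rmult_le_pos; lra). lra.
Qed.

Lemma shift p w : RInt std_normal_pdf p (p + w) = RInt (fun s => std_normal_pdf (p + s)) 0 w.
Proof.
  rewrite <- (Rplus_0_r p) at 1.
  replace (p + 0) with (1 * 0 + p) by ring. replace (p + w) with (1 * w + p) by ring.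
  rewrite <- (RInt_comp_lin (V:=R_CompleteNormedModule)) by apply phi_ex.
  apply RInt_ext. intros. change (1 * std_normal_pdf (1 * x + p) = std_normal_pdf (p + x)).
  rewrite Rmult_1_l. f_equal. ring.
Qed.

Lemma exs p u v : ex_RInt (fun s => std_normal_pdf (p + s)) u v.
Proof.
  apply (@ex_RInt_continuous R_CompleteNormedModule). intros.
  apply (continuous_comp (fun s => p + s) std_normal_pdf). 2: apply phi_cont.
  apply (@ex_derive_continuous R_AbsRing R_NormedModule). auto_derive. auto.
Qed.

Lemma Ncmp_pos w : 0 < w -> RInt std_normal_pdf a (a + w) <= k * RInt std_normal_pdf b (b + w).
Proof.
  intros Hw. rewrite !shift.
  change (k * RInt (fun s => std_normal_pdf (b + s)) 0 w) with (scal k (RInt (fun s => std_normal_pdf (b + s)) 0 w)).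
  rewrite <- (RInt_scal (V:=R_CompleteNormedModule)) by apply exs.
  apply RInt_le. lra. apply exs. apply (ex_RInt_scal (V:=R_NormedModule)). apply exs.
  intros x Hx. apply cmp_pos. lra.
Qed.

Lemma Ncmp_neg w : w < 0 -> k * RInt std_normal_pdf b (b + w) >= RInt std_normal_pdf a (a + w).
Proof.
  intros Hw. rewrite !shift.
  rewrite <- (opp_RInt_swap (V:=R_CompleteNormedModule)) by apply exs.
  rewrite <- (opp_RInt_swap (V:=R_CompleteNormedModule) (fun s => std_normal_pdf (a + s))) by apply exs.
  change (k * - RInt (fun s => std_normal_pdf (b + s)) w 0 >= - RInt (fun s => std_normal_pdf (a + s)) w 0).
  cut (k * RInt (fun s => std_normal_pdf (b + s)) w 0 <= RInt (fun s => std_normal_pdf (a + s)) w 0). lra.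
  change (k * RInt (fun s => std_normal_pdf (b + s)) w 0) with (scal k (RInt (fun s => std_normal_pdf (b + s)) w 0)).
  rewrite <- (RInt_scal (V:=R_CompleteNormedModule)) by apply exs.
  apply RInt_le. lra. apply (ex_RInt_scal (V:=R_NormedModule)). apply exs. apply exs.
  intros x Hx. apply cmp_neg. lra.
Qed.

Lemma Dpos p w : 0 < w -> 0 < RInt std_normal_pdf p (p + w).
Proof.
  intros Hw.
  apply Rle_lt_trans with (RInt (fun _ => 0) p (p + w)).
  - rewrite RInt_const. change (0 <= (p + w - p) * 0). lra.
  - apply RInt_lt. lra. intros; apply phi_cont. intros; apply continuous_const.
    intros; apply phi_pos.
Qed.

End Main.

Lemma quot_lim p : is_lim (fun w => RInt std_normal_pdf p (p + w) / w) 0 (std_normal_pdf p).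
Proof.
  assert (D : is_derive (fun y => RInt std_normal_pdf p y) p (std_normal_pdf p)).
  { apply (is_derive_RInt (V:=R_NormedModule) _ _ p p).
    - apply filter_forall. intros y. apply (RInt_correct (V:=R_CompleteNormedModule)). apply phi_ex.
    - apply phi_cont. }
  apply is_derive_Reals in D.
  apply is_lim_spec. intros eps.
  destruct (D eps (cond_pos eps)) as [delta Hd].
  exists delta. intros y Hy Hy0.
  specialize (Hd y Hy0).
  rewrite RInt_point in Hd.
  change (Rabs (RInt std_normal_pdf p (p + y) / y - std_normal_pdf p) < eps).
  replace (RInt std_normal_pdf p (p + y) / y) with ((RInt std_normal_pdf p (p + y) - 0) / y) by (f_equal; ring).
  apply Hd.
  change (Rabs (y - 0) < delta) in Hy. rewrite Rminus_0_r in Hy. exact Hy.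
Qed.

Lemma D_ne p w : w <> 0 -> RInt std_normal_pdf p (p + w) <> 0.
Proof.
  intros Hw. destruct (Rlt_dec 0 w).
  - pose proof (Dpos p w r). lra.
  - rewrite <- (opp_RInt_swap (V:=R_CompleteNormedModule)) by apply phi_ex.
    pose proof (Dpos (p + w) (- w)). replace (p + w + - w) with p in H by ring.
    change (- RInt std_normal_pdf (p + w) p <> 0). assert (0 < - w) by lra. specialize (H H0). lra.
Qed.

Lemma hrepr g x : h_fun g x =
  RInt std_normal_pdf (t_minus g - 2 * g) ((t_minus g - 2 * g) + (2 * g - x)) /
  RInt std_normal_pdf (t_plus g - 2 * g) ((t_plus g - 2 * g) + (2 * g - x)).
Proof.
  unfold h_fun. rewrite !Phi_diff. f_equal; f_equal; ring.
Qed.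

Lemma k_eq g : std_normal_pdf (t_minus g - 2 * g) / std_normal_pdf (t_plus g - 2 * g) = k_const g.
Proof.
  unfold k_const. set (a := t_minus g - 2 * g). set (b := t_plus g - 2 * g).
  unfold std_normal_pdf.
  replace (- a ^ 2 / 2) with ((- / 2 * a ^ 2 + / 2 * b ^ 2) + - b ^ 2 / 2) by field.
  rewrite exp_plus. field. split. pose proof sq_pos; lra. pose proof (exp_pos (- b ^ 2 / 2)); lra.
Qed.

Theorem lemma7 (g : R) (hg : 0 < g) :
  is_lim (h_fun g) (2 * g) (k_const g) /\
  (0 < c_const g < 1) /\
  (forall x, x < 2 * g -> h_fun g x <= c_const g / (1 - c_const g)) /\
  (forall x, x > 2 * g -> h_fun g x >= c_const g / (1 - c_const g)).
Proof.
  assert (Hk : 0 < k_const g) by apply exp_pos.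
  assert (Hc : c_const g / (1 - c_const g) = k_const g).
  { unfold c_const. field. split; lra. }
  rewrite Hc.
  pose proof (tpm g hg) as Hab.
  set (a := t_minus g - 2 * g) in *. set (b := t_plus g - 2 * g) in *.
  assert (hab : b <= a) by (unfold a, b; lra).
  assert (Ek : k_const g = exp (- / 2 * a ^ 2 + / 2 * b ^ 2)) by reflexivity.
  split; [|split; [|split]].
  - rewrite <- k_eq. fold a b.
    apply is_lim_ext_loc with
      (fun x => (fun w => RInt std_normal_pdf a (a + w) / w) (2 * g - x) /
                (fun w => RInt std_normal_pdf b (b + w) / w) (2 * g - x)).
    + exists (mkposreal 1 Rlt_0_1). intros y _ Hy. rewrite hrepr. fold a b. simpl.
      assert (2 * g - y <> 0) by lra.
      pose proof (D_ne b (2 * g - y) H). field. auto.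
    + change (Finite (std_normal_pdf a / std_normal_pdf b)) with
        (Rbar_div (Finite (std_normal_pdf a)) (Finite (std_normal_pdf b))).
      assert (L : is_lim (fun x => 2 * g - x) (2 * g) 0).
      { replace (Finite 0) with (Finite ((fun x => 2 * g - x) (2 * g))) by (f_equal; simpl; ring).
        apply is_lim_continuity. reg. }
      assert (N : Rbar_locally' (2 * g) (fun y => Finite (2 * g - y) <> Finite 0)).
      { exists (mkposreal 1 Rlt_0_1). intros y _ Hy E. injection E. lra. }
      pose proof (phi_pos b).
      apply is_lim_div.
      * apply (is_lim_comp (fun w => RInt std_normal_pdf a (a + w) / w) (fun x => 2 * g - x) (2 * g) (std_normal_pdf a) 0).
        apply quot_lim. exact L. exact N.
      * apply (is_lim_comp (fun w => RInt std_normal_pdf b (b + w) / w) (fun x => 2 * g - x) (2 * g) (std_normal_pdf b) 0).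
        apply quot_lim. exact L. exact N.
      * intro E. injection E. lra.
      * simpl. 
        exact I.
  - unfold c_const. split.
    + apply Rdiv_lt_0_compat; lra.
    + apply Rlt_div_l; lra.
  - intros x Hx. rewrite hrepr. fold a b. rewrite Ek.
    pose proof (Dpos b (2 * g - x) ltac:(lra)).
    apply Rle_div_l. lra. pose proof (Ncmp_pos a b hab (2 * g - x) ltac:(lra)). lra.
  - intros x Hx. rewrite hrepr. fold a b. rewrite Ek.
    pose proof (Ncmp_neg a b hab (2 * g - x) ltac:(lra)).
    pose proof (Dpos (b + (2 * g - x)) (- (2 * g - x)) ltac:(lra)).
    replace (b + (2 * g - x) + - (2 * g - x)) with b in H0 by ring.
    assert (ED : RInt std_normal_pdf b (b + (2 * g - x)) = - RInt std_normal_pdf (b + (2 * g - x)) b).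
    { rewrite <- (opp_RInt_swap (V:=R_CompleteNormedModule)) by apply phi_ex. reflexivity. }
    set (D := RInt std_normal_pdf b (b + (2 * g - x))) in *.
    set (Nn := RInt std_normal_pdf a (a + (2 * g - x))) in *.
    set (k := exp (- / 2 * a ^ 2 + / 2 * b ^ 2)) in *.
    assert (HD : D < 0) by lra.
    replace k with ((k * - D) * / (- D)) by (field; lra).
    replace (Nn / D) with ((- Nn) * / (- D)) by (field; lra).
    apply Rle_ge, Rmult_le_compat_r. left; apply Rinv_0_lt_compat; lra. lra.
Qed.
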